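(* Let $\mathcal{F}\subseteq\mathcal{P}(\omega)$ be a free filter, let $h\colon Q\to Q$ be a homeomorphism of $Q=[-1,1]^\omega$, and let $D\subseteq(-1,1)^\omega$ be countable and dense in $Q$. Assume there is $z\in C_\mathcal{F}$ such that for every $d\in D$ and $n\in\omega$, $|(d-h(d))(n)|\le|z(n)|$. Then $h[K_\mathcal{F}]=K_\mathcal{F}$.
   Context: A filter on $\omega$ is free if it contains all cofinite sets. $Q=[-1,1]^\omega$ has the product topology, $Q^\circ=(-1,1)^\omega$. $K_\mathcal{F}=\{f\in Q:\forall m\in\omega\ \{n\in\omega:|f(n)|<2^{-m}\}\in\mathcal{F}\}$ and $C_\mathcal{F}=K_\mathcal{F}\cap Q^\circ$. Differences are coordinatewise. *)

(* Defs.v *)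
From HB Require Import structures.
From mathcomp Require Import all_boot all_order all_algebra.
From mathcomp Require Import all_classical all_reals all_analysis.
Unset Printing Implicit Defensive.
Import Order.TTheory GRing.Theory Num.Theory.
Import numFieldNormedType.Exports.
Local Open Scope classical_set_scope.
Local Open Scope ring_scope.

Notation Romega R := {ptws nat -> R}.

Definition Qcube (R : realType) : set (Romega R) := [set f | forall n, `|f n| <= 1].
Definition Qopen (R : realType) : set (Romega R) := [set f | forall n, `|f n| < 1].

Definition is_filter (F : set (set nat)) : Prop :=
  [/\ F setT,
      (forall A B, F A -> A `<=` B -> F B),
      (forall A B, F A -> F B -> F (A `&` B)) &
      ~ F set0].

Definition free_filter (F : set (set nat)) : Prop :=
  is_filter F /\ (forall A : set nat, finite_set (~` A) -> F A).

Definition K_F (R : realType) (F : set (set nat)) : set (Romega R) :=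
  [set f | Qcube R f /\
     forall m : nat, F [set n | `|f n| < (2 : R) ^- m]].

Definition C_F (R : realType) (F : set (set nat)) : set (Romega R) :=
  K_F R F `&` Qopen R.

(* h is a homeomorphism of Q onto itself (Q with the subspace topology of
   the product topology); values of h outside Q are irrelevant. *)
Definition homeomorphism_Q (R : realType) (h : Romega R -> Romega R) : Prop :=
  exists g : Romega R -> Romega R,
    [/\ (forall x, Qcube R x -> Qcube R (h x)),
        (forall y, Qcube R y -> Qcube R (g y)),
        (forall x, Qcube R x -> g (h x) = x) &
        (forall y, Qcube R y -> h (g y) = y)] /\
    ({within Qcube R, continuous h} /\ {within Qcube R, continuous g}).

(* Main.v *)
Require Import Defs.
From HB Require Import structures.
From mathcomp Require Import all_boot all_order all_algebra.
From mathcomp Require Import all_classical all_reals all_analysis.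
Import Order.TTheory GRing.Theory Num.Theory.
Import numFieldNormedType.Exports.
Local Open Scope classical_set_scope.
Local Open Scope ring_scope.

Lemma bound_ext (R : realType) (h : Romega R -> Romega R) (D : set (Romega R))
  (z : Romega R) :
  {within Qcube R, continuous h} ->
  D `<=` Qopen R -> Qcube R `<=` closure D ->
  (forall d n, D d -> `|d n - h d n| <= `|z n|) ->
  forall x n, Qcube R x -> `|x n - h x n| <= `|z n|.
Proof.
move=> hc DQ Qcl Hd x n Qx.
rewrite leNgt; apply/negP => Hlt.
have hx := (proj1 (subspace_continuousP _ _) hc) x Qx.
have FF : Filter (within (Qcube R) (nbhs x)) by apply: within_filter.
have c1 : (fun y : Romega R => h y n) @ within (Qcube R) (nbhs x) --> h x n.
  exact: ((@pointwise_cvgP _ _ (h @ within (Qcube R) (nbhs x)) (h x) _).1 hx n).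
have c0 : (fun y : Romega R => y n) @ within (Qcube R) (nbhs x) --> x n.
  have : (within (Qcube R) (nbhs x)) --> (x : Romega R) by apply: cvg_within.
  by move=> H; exact: ((pointwise_cvgP x FF).1 H n).
have c2 : (fun y : Romega R => y n - h y n) @ within (Qcube R) (nbhs x) --> x n - h x n by apply: cvgB.
have Hev : \forall t \near within (Qcube R) (nbhs x), `|z n| < `|t n - h t n|.
  exact: (cvgr_norm_gt _ c2 _ Hlt).
have [d [Dd Hdd]] := Qcl x Qx _ Hev.
have Qd : Qcube R d by move=> k; apply/ltW; apply: (DQ d Dd).
have := Hdd Qd; rewrite /= ltNge => /negP; apply; exact: Hd.
Qed.

Lemma K_close (R : realType) (F : set (set nat)) (z x w : Romega R) :
  (forall A B, F A -> A `<=` B -> F B) ->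
  (forall A B, F A -> F B -> F (A `&` B)) ->
  K_F R F z -> K_F R F x -> Qcube R w ->
  (forall n, `|x n - w n| <= `|z n|) -> K_F R F w.
Proof.
move=> Fup FI [_ zF] [_ xF] Qw H; split => // m.
apply: (Fup _ _ (FI _ _ (xF m.+1) (zF m.+1))) => n [/= xn zn].
have e : (2 : R) ^- m = 2 ^- m.+1 + 2 ^- m.+1.
  by rewrite exprSr invfM -splitr.
rewrite e.
have : `|w n| <= `|x n| + `|x n - w n|.
  rewrite {1}(_ : w n = x n - (x n - w n)); first exact: ler_normB.
  by rewrite opprB addrC subrK.
move=> hle; apply: (le_lt_trans hle); apply: ltrD => //.
exact: (le_lt_trans (H n) zn).
Qed.

Theorem mainTheorem11 (R : realType) (F : set (set nat))
  (h : Romega R -> Romega R) (D : set (Romega R)) :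
  free_filter F ->
  homeomorphism_Q R h ->
  D `<=` Qopen R -> countable D -> Qcube R `<=` closure D ->
  (exists z, C_F R F z /\
     forall d n, D d -> `|d n - h d n| <= `|z n|) ->
  h @` K_F R F = K_F R F.
Proof.
move=> [[FT Fup FI _] _] [g [[hQ gQ gh hg] [hc gc]]] DQ _ Qcl [z [[Kz _] Hz]].
have B := bound_ext _ _ _ _ hc DQ Qcl Hz.
rewrite eqEsubset; split.
  move=> _ [x Kx <-]; apply: (K_close _ _ _ _ _ Fup FI Kz Kx (hQ _ Kx.1)).
  by move=> n; apply: B; exact: Kx.1.
move=> y Ky; exists (g y); last exact: hg Ky.1.
apply: (K_close _ _ _ _ _ Fup FI Kz Ky (gQ _ Ky.1)) => n.
rewrite distrC; have := B (g y) n (gQ _ Ky.1).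
by rewrite (hg y Ky.1).
Qed.
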